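(* $\mathfrak{L}(\mathrm{rtDVA}(1))\subsetneq\mathfrak{L}(\mathrm{1DFAM})$.
   Context: $\mathfrak{L}(A)$ denotes the class of languages recognized by machines of type $A$. A real-time deterministic vector automaton of dimension $1$ ($\mathrm{rtDVA}(1)$) is a 6-tuple $(Q,\Sigma,\delta,q_0,Q_a,v)$ with finite state set $Q$, initial state $q_0$, accept states $Q_a$, initial value $v\in\mathbb{Q}$ (freely chosen), and $\delta:Q\times(\Sigma\cup\{\cent,\$\})\times\{=,\neq\}\to Q\times\mathbb{Q}$. The input $w$ is read as $\cent w\$$ left to right, one symbol per step; in state $q$ reading $\sigma$, with $\omega$ equal to ''$=$'' iff the current value equals $1$, if $\delta(q,\sigma,\omega)=(q',m)$ the machine goes to $q'$ and multiplies its value by $m$. Acceptance: after processing $\$$, the state is in $Q_a$ and the value equals $1$. A one-way deterministic finite automaton with multiplication (1DFAM) is a 6-tuple $(Q,\Sigma,\delta,q_0,Q_a,\Gamma)$ with $\Gamma$ a finite set of rationals and a rational register initially $1$; $\delta:Q\times(\Sigma\cup\{\cent,\$\})\times\{=,\neq\}\to Q\times\{\downarrow,\rightarrow\}\times\Gamma$; reading $\sigma$ in state $q$ with $\omega$ ''$=$'' iff the register equals $1$, if $\delta(q,\sigma,\omega)=(q',d,\gamma)$ it goes to $q'$, keeps the head in place ($\downarrow$) or moves it one cell right ($\rightarrow$), and multiplies the register by $\gamma$. The tape holds $\cent w\$$ and the input is accepted iff the machine enters an accept state with register value $1$ after scanning $\$$. *)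

(* Defs.v *)
From mathcomp Require Import all_boot all_order all_algebra.
Set Implicit Arguments. Unset Strict Implicit. Unset Printing Implicit Defensive.
Import GRing.Theory Num.Theory.
Local Open Scope ring_scope.

Inductive tsym (S : Type) : Type := Cent | Dollar | Sym of S.
Arguments Cent {S}. Arguments Dollar {S}.

Definition tape (S : Type) (w : seq S) : seq (tsym S) :=
  Cent :: rcons (map (@Sym S) w) Dollar.

Record rtDVA1 (S : Type) := {
  dva_Q : finType;
  dva_delta : dva_Q -> tsym S -> bool -> dva_Q * rat;
     (* the bool argument is omega: true iff current value equals 1 *)
  dva_q0 : dva_Q;
  dva_acc : pred dva_Q;
  dva_v : rat }.

Arguments dva_delta {S} r _ _ _.
Arguments dva_acc {S} r _.
Definition dva_step S (M : rtDVA1 S) (c : dva_Q M * rat) (a : tsym S)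
  : dva_Q M * rat :=
  let: (q, x) := c in
  let: (q', m) := dva_delta M q a (x == 1) in (q', x * m).

Definition dva_accepts S (M : rtDVA1 S) (w : seq S) : bool :=
  let: (q, x) := foldl (@dva_step S M) (dva_q0 M, dva_v M) (tape w) in
  (q \in dva_acc M) && (x == 1).

Definition rtDVA1_language (S : finType) (L : seq S -> Prop) : Prop :=
  exists M : rtDVA1 S, forall w, L w <-> dva_accepts M w.

(* head move: false = stay (down arrow), true = move right *)
Record DFAM1 (S : Type) := {
  fam_Q : finType;
  fam_Gamma : seq rat;
  fam_delta : fam_Q -> tsym S -> bool -> fam_Q * bool * rat;
  fam_delta_Gamma : forall q a b, (fam_delta q a b).2 \in fam_Gamma;
  fam_q0 : fam_Q;
  fam_acc : pred fam_Q }.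

(* configuration: state, head position on the tape (0 = cent), register *)
Arguments fam_delta {S} d _ _ _.
Arguments fam_acc {S} d _.
Definition fam_step S (M : DFAM1 S) (w : seq S) (c : fam_Q M * nat * rat)
  : fam_Q M * nat * rat :=
  let: (q, i, x) := c in
  if (i < size (tape w))%N then
    let: (q', d, g) := fam_delta M q (nth Dollar (tape w) i) (x == 1) in
    (q', (if d then i.+1 else i), x * g)
  else c. (* head has moved past $ : the machine has halted *)

(* accepted iff at some point the head has moved off $ (i.e. $ has been
   scanned) and the machine is in an accept state with register value 1 *)
Definition fam_accepts S (M : DFAM1 S) (w : seq S) : Prop :=
  exists n : nat,
    let: (q, i, x) := iter n (@fam_step S M w) (fam_q0 M, 0%N, 1) in
    [&& (i == size (tape w))%N, q \in fam_acc M & x == 1].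

Definition DFAM1_language (S : finType) (L : seq S -> Prop) : Prop :=
  exists M : DFAM1 S, forall w, L w <-> fam_accepts M w.

(* Main.v *)
Require Import Defs.
From mathcomp Require Import all_boot all_order all_algebra.
Set Implicit Arguments. Unset Strict Implicit. Unset Printing Implicit Defensive.
Import GRing.Theory Num.Theory.
Local Open Scope ring_scope.

Section Part1.
Variables (S : finType) (M : rtDVA1 S).

Definition enc (a : tsym S) : option (option S) :=
  match a with Cent => None | Dollar => Some None | Sym s => Some (Some s) end.
Definition dec (o : option (option S)) : tsym S :=
  match o with None => Cent | Some None => Dollar | Some (Some s) => Sym s end.
Lemma encK : cancel enc dec. Proof. by case. Qed.

Definition sdelta (o : option (dva_Q M)) (a : tsym S) (b : bool)
  : option (dva_Q M) * bool * rat :=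
  match o with
  | None => (Some (dva_q0 M), false, dva_v M)
  | Some q => (Some (dva_delta M q a b).1, true, (dva_delta M q a b).2)
  end.

Definition sGamma : seq rat := dva_v M ::
  [seq (dva_delta M t.1.1 (dec t.1.2) t.2).2 | t <- enum {: dva_Q M * option (option S) * bool}].

Lemma sGammaP q a b : (sdelta q a b).2 \in sGamma.
Proof.
case: q => [q|] /=; last by rewrite inE eqxx.
rewrite inE; apply/orP; right.
have -> : (dva_delta M q a b).2 = (dva_delta M (q, enc a, b).1.1 (dec (q, enc a, b).1.2) (q, enc a, b).2).2 by rewrite /= encK.
by apply: map_f; rewrite mem_enum.
Qed.

Definition sacc : pred (option (dva_Q M)) := fun o => if o is Some q then dva_acc M q else false.

Definition sim : DFAM1 S := @Build_DFAM1 S _ sGamma sdelta sGammaP None sacc.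

Lemma sim_run w j : (j <= size (tape w))%N ->
  iter j.+1 (@fam_step S sim w) (None, 0%N, 1) =
  (Some (foldl (@dva_step S M) (dva_q0 M, dva_v M) (take j (tape w))).1, j,
   (foldl (@dva_step S M) (dva_q0 M, dva_v M) (take j (tape w))).2).
Proof.
elim: j => [|j IH] Hj.
  by rewrite /= /fam_step /= mul1r.
rewrite iterS IH ?(ltnW Hj) // (take_nth Dollar Hj) foldl_rcons.
rewrite /fam_step Hj /=.
case: (foldl _ _ _) => q x /=.
rewrite /dva_step; case: (dva_delta M q _ _) => q' m /=.
by [].
Qed.

Lemma fin_fix w c : c.1.2 = size (tape w) -> @fam_step S sim w c = c.
Proof. by case: c => [[q i] x] /= ->; rewrite /fam_step ltnn. Qed.

Lemma sim_correct w : dva_accepts M w <-> fam_accepts sim w.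
Proof.
have Hf := sim_run (leqnn (size (tape w))).
rewrite take_size in Hf.
rewrite /dva_accepts /fam_accepts.
split.
  move=> H; exists (size (tape w)).+1; rewrite Hf.
  by case: (foldl _ _ _) H => q x /= H; rewrite eqxx.
case=> n.
change (fam_q0 sim) with (@None (dva_Q M)).
have key : forall k, iter (k + (size (tape w)).+1) (@fam_step S sim w) (None, 0%N, 1)
   = iter (size (tape w)).+1 (@fam_step S sim w) (None, 0%N, 1).
  elim=> [//|k IHk]; rewrite addSn iterS IHk fin_fix // Hf //.
case: (leqP n (size (tape w))) => Hn.
  case: n Hn => [|j] Hn.
    by [].
  rewrite sim_run ?(ltnW Hn) //=.
  by move/and3P=> [/eqP E]; move: Hn; rewrite E ltnn.
rewrite -(subnK Hn) key Hf.
by case: (foldl _ _ _) => q x /= /and3P [_ H1 H2]; rewrite H2 andbT; exact: H1.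
Qed.

End Part1.

Definition vstep (o : option nat) (c : bool) : option nat :=
  match o with
  | None => None
  | Some k => if c then Some k.+1 else (if k is k'.+1 then Some k' else None)
  end.
Definition cval (w : seq bool) := foldl vstep (Some 0%N) w.
Definition Lg (w : seq bool) : Prop := cval w != None.

Lemma foldl_None s : foldl vstep None s = None.
Proof. by elim: s. Qed.

Lemma cval_prefix w j : cval w != None -> cval (take j w) != None.
Proof.
rewrite /cval -{1}(cat_take_drop j w) foldl_cat.
by case: (foldl _ _ (take j w)) => // ; rewrite foldl_None.
Qed.

Lemma fold_as n k : foldl vstep (Some k) (nseq n true) = Some (k + n)%N.
Proof. by elim: n k => [|n IH] k /=; rewrite ?addn0 // IH addnS. Qed.

Lemma fold_bs m k : foldl vstep (Some k) (nseq m false) =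
  if (m <= k)%N then Some (k - m)%N else None.
Proof.
elim: m k => [|m IH] [|k] //=.
by rewrite foldl_None.
Qed.

(* states: Some true = P (initial), Some false = Dead, None = Acc *)
Definition gdelta (q : option bool) (a : tsym bool) (e : bool)
  : option bool * bool * rat :=
  match q with
  | Some true =>
      match a with
      | Cent => (Some true, true, 1)
      | Sym true => (Some true, true, 2)
      | Sym false => if e then (Some false, true, 1) else (Some true, true, 2^-1)
      | Dollar => if e then (None, true, 1) else (Some true, false, 2^-1)
      end
  | _ => (q, true, 1)
  end.

Definition gGamma : seq rat := [:: 1; 2; 2^-1].
Lemma gGammaP q a e : (gdelta q a e).2 \in gGamma.
Proof.
by case: q => [[]|]; case: a => [||[]]; case: e; rewrite /= !inE eqxx ?orbT.
Qed.

Definition gM : DFAM1 bool :=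
  @Build_DFAM1 bool _ gGamma gdelta gGammaP (Some true) (fun q => q == None).

Lemma size_tape (T : Type) (w : seq T) : size (tape w) = (size w).+2.
Proof. by rewrite /tape /= size_rcons size_map. Qed.

Lemma nth_tape_S (T : Type) (w : seq T) x j : (j < size w)%N ->
  nth Dollar (tape w) j.+1 = Sym (nth x w j).
Proof.
move=> Hj; rewrite /tape /= nth_rcons size_map Hj.
by rewrite (nth_map x).
Qed.

Lemma nth_tape_D (T : Type) (w : seq T) :
  nth Dollar (tape w) (size w).+1 = Dollar.
Proof. by rewrite /tape /= nth_rcons size_map ltnn eqxx. Qed.

Lemma two_eq1 k : ((2 : rat) ^+ k == 1) = (k == 0%N).
Proof. by rewrite pexprn_eq1 // orbF. Qed.

Definition Inv (w : seq bool) (c : option bool * nat * rat) : Prop :=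
  let: (q, i, x) := c in
  match q with
  | Some true => exists cn k, [/\ cval (take i.-1 w) = Some cn, (k <= cn)%N,
                                 x = 2 ^+ k & (i <= (size w).+1)%N]
  | Some false => True
  | None => Lg w
  end.

Lemma Inv_step w c : Inv w c -> Inv w (fam_step (M:=gM) w c).
Proof.
case: c => [[q i] x]; rewrite /fam_step size_tape.
case: ifP => // Hi.
case: q => [[]|] //=.
case=> cn [k [Hc Hk Hx Hi']].
case: i Hi Hc Hi' => [|j] Hi Hc Hi'.
  by rewrite /=; exists cn, k; rewrite mulr1.
rewrite /= in Hc.
case: (ltngtP j (size w)) => Hj.
- rewrite (nth_tape_S false Hj) /=.
  have Ht := take_nth false Hj.
  case E: (nth false w j).
  + rewrite /=; exists cn.+1, k.+1; split => //.
    by rewrite Ht /cval foldl_rcons -/(cval _) Hc E.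
    by rewrite Hx exprSr.
  + rewrite Hx two_eq1.
    case: k Hk Hx => [|k] Hk Hx //=.
    case: cn Hc Hk => [|cn] Hc Hk //.
    exists cn, k; split => //.
    * by rewrite Ht /cval foldl_rcons -/(cval _) Hc E.
    * by rewrite exprSr mulfK.
- by move: Hi'; rewrite ltnS leqNgt Hj.
- subst j; rewrite nth_tape_D /=.
  rewrite Hx two_eq1.
  case: k Hk Hx => [|k] Hk Hx /=.
    by rewrite /Lg -(take_size w) Hc.
  exists cn, k; split => //; first by apply: ltnW.
  by rewrite exprSr mulfK.
Qed.

Lemma gM_sound w : fam_accepts gM w -> Lg w.
Proof.
case=> n.
have: Inv w (iter n (fam_step (M:=gM) w) (fam_q0 gM, 0%N, 1)).
  elim: n => [|n IH]; last by rewrite iterS; apply: Inv_step.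
  by rewrite /= /Inv /= take0; exists 0%N, 0%N.
case: (iter _ _ _) => [[q i] x].
by case: q => [[]|] H /and3P [_ H2 _].
Qed.

Lemma gM_run w j : Lg w -> (j <= size w)%N -> exists cn,
  cval (take j w) = Some cn /\
  iter j.+1 (fam_step (M:=gM) w) (fam_q0 gM, 0%N, 1) = (Some true, j.+1, 2 ^+ cn).
Proof.
move=> Hw; elim: j => [|j IH] Hj.
  by exists 0%N; rewrite take0; split.
have [cn [Hc Hit]] := IH (ltnW Hj).
rewrite iterS Hit /fam_step (_ : (j.+1 < size (tape w))%N); last by rewrite size_tape ltnS ltnW.
rewrite (nth_tape_S false Hj).
have Ht := take_nth false Hj.
have Hp := cval_prefix j.+1 Hw.
rewrite Ht /cval foldl_rcons -/(cval _) Hc in Hp *.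
case: (nth false w j) Hp => /= Hp.
  by exists cn.+1; rewrite exprSr.
case: cn Hc Hp {Hit} => [|cn] Hc Hp //=.
exists cn; split => //.
by rewrite two_eq1 /= exprSr mulfK.
Qed.

Lemma gM_drain w k r :
  iter k (fam_step (M:=gM) w) (Some true, (size w).+1, 2 ^+ (r + k)) =
  (Some true, (size w).+1, 2 ^+ r).
Proof.
elim: k r => [|k IH] r; first by rewrite addn0.
rewrite iterS addnS -addSn IH /fam_step size_tape ltnSn nth_tape_D /=.
by rewrite two_eq1 /= exprSr mulfK.
Qed.

Lemma gM_complete w : Lg w -> fam_accepts gM w.
Proof.
move=> Hw; have [cn [Hc Hit]] := gM_run Hw (leqnn (size w)).
exists ((cn + (size w).+1).+1).
rewrite iterS iterD Hit (_ : 2 ^+ cn = 2 ^+ (0 + cn)) // gM_drain /fam_step size_tape ltnSn nth_tape_D /=.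
by rewrite eqxx.
Qed.

Section NoDVA.
Variable M : rtDVA1 bool.

Definition cfg (u : seq bool) :=
  foldl (@dva_step bool M) (dva_q0 M, dva_v M) (Cent :: map (@Sym bool) u).

Definition Fin (c : dva_Q M * rat) (v : seq bool) :=
  let: (q, x) := foldl (@dva_step bool M) c (rcons (map (@Sym bool) v) Dollar) in
  (q \in dva_acc M) && (x == 1).

Lemma acc_cat u v : dva_accepts M (u ++ v) = Fin (cfg u) v.
Proof. by rewrite /dva_accepts /tape /Fin /cfg map_cat rcons_cat /= foldl_cat. Qed.

Definition hh (t : dva_Q M * bool) : dva_Q M * rat :=
  (t.1, if t.2 then 1 else ((dva_delta M t.1 Dollar false).2)^-1).

Lemma cfg_det u : Fin (cfg u) [::] -> cfg u = hh ((cfg u).1, (cfg u).2 == 1).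
Proof.
case: (cfg u) => p x; rewrite /Fin /hh /= /dva_step.
case: eqP => [->|Hx] //.
case: (dva_delta M p Dollar false) => q' m /= /andP [_ /eqP H].
have Hm : m != 0 by apply/eqP => Hm; move: H; rewrite Hm mulr0 => /eqP; rewrite eq_sym oner_eq0.
by rewrite -[x](mulfK Hm) H mul1r.
Qed.

Lemma no_dva : (forall w, Lg w <-> dva_accepts M w) -> False.
Proof.
move=> HM.
pose g (n : nat) := ((cfg (nseq n true)).1, (cfg (nseq n true)).2 == 1).
have Hcfg n : cfg (nseq n true) = hh (g n).
  apply: cfg_det; rewrite -acc_cat cats0; apply/HM.
  by rewrite /Lg /cval fold_as.
pose N := #|{: dva_Q M * bool}|.
pose f (i : 'I_N.+1) := g i.
have : ~~ injectiveb f.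
  apply/negP => /injectiveP Hinj; have := leq_card f Hinj.
  by rewrite card_ord ltnn.
case/injectivePn => i [j Hij Hf].
have key : forall n n', (n < n')%N -> g n = g n' -> False.
  move=> n n' Hn Hg.
  have E : cfg (nseq n true) = cfg (nseq n' true) by rewrite !Hcfg Hg.
  have H1 : dva_accepts M (nseq n' true ++ nseq n' false).
    by apply/HM; rewrite /Lg /cval foldl_cat fold_as fold_bs add0n leqnn.
  have H2 : ~ Lg (nseq n true ++ nseq n' false).
    by rewrite /Lg /cval foldl_cat fold_as fold_bs add0n leqNgt Hn.
  by apply: H2; apply/HM; rewrite acc_cat E -acc_cat.
case: (ltngtP i j) => H.
- exact: (key _ _ H Hf).
- exact: (key _ _ H (esym Hf)).
- by move: Hij; rewrite (val_inj H) eqxx.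
Qed.
End NoDVA.

Theorem theorem7 :
  (forall (S : finType) (L : seq S -> Prop),
      rtDVA1_language L -> DFAM1_language L) /\
  (exists (S : finType) (L : seq S -> Prop),
      DFAM1_language L /\ ~ rtDVA1_language L).
Proof.
split.
- move=> S L [M HM]; exists (sim M) => w; split => H.
    by apply/sim_correct/HM.
  by apply/HM/sim_correct.
- exists bool, Lg; split.
    by exists gM => w; split; [exact: gM_complete | exact: gM_sound].
  by case=> M HM; exact: (no_dva HM).
Qed.
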